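(* Let $\lambda$ be an infinite cardinal and $k\ge 2$. A mutually algebraic subset $Y\subseteq\lambda^k$ is monadically definable if and only if $Y\setminus\Delta_k$ is finite, where $\Delta_k=\{(a,\dots,a)\in\lambda^k:a\in\lambda\}$.
   Context: $Y\subseteq\lambda^k$ is mutually algebraic if there is an integer $m$ such that for every $a\in\lambda$ the set $\{\bar a\in Y: a \text{ is a coordinate of } \bar a\}$ has size at most $m$. $Y\subseteq\lambda^k$ is monadically definable if it is definable (with parameters) in some structure $(\lambda,U_1,\dots,U_n)$ with $U_i$ unary predicates. *)

(* Defs.v *)
From mathcomp Require Import all_boot.
From Stdlib Require Import List.

Set Implicit Arguments.
Unset Strict Implicit.
Unset Printing Implicit Defensive.

Definition infinite_type (T : Type) : Prop :=
  ~ exists s : list T, forall x : T, In x s.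

Definition tuple_set (T : Type) (k : nat) := ('I_k -> T) -> Prop.

Definition card_le (A : Type) (S : A -> Prop) (m : nat) : Prop :=
  exists s : list A, (length s <= m)%coq_nat /\ forall y, S y -> In y s.

Definition finite_set (A : Type) (S : A -> Prop) : Prop :=
  exists s : list A, forall y, S y -> In y s.

Definition mutually_algebraic (T : Type) (k : nat) (Y : tuple_set T k) : Prop :=
  exists m : nat, forall a : T,
    card_le (fun y : 'I_k -> T => Y y /\ exists i : 'I_k, y i = a) m.

Definition diagonal (T : Type) (k : nat) : tuple_set T k :=
  fun y => exists a : T, forall i : 'I_k, y i = a.

Inductive formula (n : nat) : Type :=
| FEq : nat -> nat -> formula n
| FPred : 'I_n -> nat -> formula n
| FNot : formula n -> formula n
| FAnd : formula n -> formula n -> formula n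
| FExists : nat -> formula n -> formula n.

Definition update (T : Type) (e : nat -> T) (v : nat) (t : T) : nat -> T :=
  fun w => if w == v then t else e w.

Fixpoint sat (T : Type) (n : nat) (U : 'I_n -> T -> Prop) (e : nat -> T)
    (phi : formula n) : Prop :=
  match phi with
  | FEq v w => e v = e w
  | FPred j v => U j (e v)
  | FNot psi => ~ sat U e psi
  | FAnd psi chi => sat U e psi /\ sat U e chi
  | FExists v psi => exists t : T, sat U (update e v t) psi
  end.

(* Assignment: variables 0..k-1 get the tuple x, variables >= k get parameters p. *)
Definition tuple_env (T : Type) (k : nat) (x : 'I_k -> T) (p : nat -> T) : nat -> T :=
  fun v => match @insub nat (fun i => i < k) 'I_k v with
           | Some j => x j
           | None => p v
           end.

Definition monadically_definable (T : Type) (k : nat) (Y : tuple_set T k) : Prop :=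
  exists (n : nat) (U : 'I_n -> T -> Prop) (phi : formula n) (p : nat -> T),
    forall x : 'I_k -> T, Y x <-> sat U (tuple_env x p) phi.

(* Main.v *)
Require Import Defs.
From mathcomp Require Import all_boot.
From mathcomp Require Import zify.
From Stdlib Require Import List ClassicalEpsilon FunctionalExtensionality Classical.

Set Implicit Arguments.
Unset Strict Implicit.
Unset Printing Implicit Defensive.

Fixpoint vars n (f : formula n) : list nat :=
  match f with
  | FEq v w => v :: w :: nil
  | FPred _ v => v :: nil
  | FNot g => vars g
  | FAnd g h => vars g ++ vars h
  | FExists v g => v :: vars g
  end.

Lemma sat_inv (T : Type) n (U : 'I_n -> T -> Prop) (s si : T -> T)
  (ssi : forall x, s (si x) = x) (sis : forall x, si (s x) = x)
  (sU : forall j x, U j (s x) <-> U j x) (f : formula n) :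
  forall e e', (forall v, In v (vars f) -> e' v = s (e v)) -> (sat U e f <-> sat U e' f).
Proof.
  induction f as [v w|j v|g IH|g IHg h IHh|v g IH]; intros e e' He; simpl in *.
  - rewrite !He; auto. split; [congruence|]. intro E.
    rewrite -(sis (e v)) -(sis (e w)) E //.
  - rewrite He; auto. rewrite sU; tauto.
  - rewrite (IH e e' He); tauto.
  - rewrite (IHg e e') ?(IHh e e'); try tauto; intros; apply He; apply in_or_app; auto.
  - split.
    + move=> [t Ht]; exists (s t). move: Ht; apply (IH _ (update e' v (s t))).
      move=> w Hw; rewrite /update; case: (w == v); first done. apply He; auto.
    + move=> [t Ht]; exists (si t). move: Ht; apply (IH (update e v (si t)) _).
      move=> w Hw; rewrite /update; case: (w == v); first by rewrite ssi. apply He; auto.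
Qed.

Definition swap T (a c : T) (x : T) : T :=
  if excluded_middle_informative (x = a) then c
  else if excluded_middle_informative (x = c) then a else x.

Lemma swap_eqa T (a c x : T) : x = a -> swap a c x = c.
Proof. rewrite /swap => H; by destruct (excluded_middle_informative (x = a)). Qed.

Lemma swap_eqc T (a c x : T) : x <> a -> x = c -> swap a c x = a.
Proof.
  rewrite /swap => H H'; destruct (excluded_middle_informative (x = a)) => //=.
  by destruct (excluded_middle_informative (x = c)).
Qed.

Lemma swap_other T (a c x : T) : x <> a -> x <> c -> swap a c x = x.
Proof.
  rewrite /swap => H H'; destruct (excluded_middle_informative (x = a)) => //=.
  by destruct (excluded_middle_informative (x = c)).
Qed.

Lemma swap_cases T (a c x : T) (P : T -> Prop) :
  (x = a -> P c) -> (x <> a -> x = c -> P a) -> (x <> a -> x <> c -> P x) -> P (swap a c x).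
Proof.
  move=> H1 H2 H3; destruct (classic (x = a)) as [E|E]; first by rewrite swap_eqa //; auto.
  destruct (classic (x = c)) as [E'|E']; first by rewrite swap_eqc //; auto.
  rewrite swap_other //; auto.
Qed.

Lemma swap_invol T (a c x : T) : swap a c (swap a c x) = x.
Proof.
  apply (swap_cases (P := fun y => swap a c y = x)) => H.
  - destruct (classic (c = a)) as [E|E]; first by rewrite swap_eqa; congruence.
    rewrite swap_eqc; congruence.
  - move=> H'; rewrite swap_eqa; congruence.
  - move=> H'; rewrite swap_other; congruence.
Qed.

Lemma swap_a T (a c : T) : swap a c a = c.
Proof. by rewrite swap_eqa. Qed.

Lemma swap_U T n (U : 'I_n -> T -> Prop) (a c : T) :
  (forall j, U j a <-> U j c) -> forall j x, U j (swap a c x) <-> U j x.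
Proof.
  move=> H j x; apply (swap_cases (P := fun y => U j y <-> U j x)) => E.
  - subst; rewrite H; tauto.
  - move=> E'; subst; rewrite H; tauto.
  - tauto.
Qed.

Definition dec (P : Prop) : bool := if excluded_middle_informative P then true else false.

Definition tau T n (U : 'I_n -> T -> Prop) (x : T) : {ffun 'I_n -> bool} :=
  [ffun j => dec (U j x)].

Lemma tau_U T n (U : 'I_n -> T -> Prop) a c : tau U a = tau U c -> forall j, U j a <-> U j c.
Proof.
  move=> H j; have : tau U a j = tau U c j by rewrite H.
  rewrite !ffunE /dec.
  destruct (excluded_middle_informative (U j a)); destruct (excluded_middle_informative (U j c)) => //= _; tauto.
Qed.

Lemma finite_cells T n (U : 'I_n -> T -> Prop) :
  exists F : list T, forall x, finite_set (fun c => tau U c = tau U x) -> In x F.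
Proof.
  suff: forall ts : list {ffun 'I_n -> bool}, exists F, forall x, tau U x \in ts ->
     finite_set (fun c => tau U c = tau U x) -> In x F.
  { move=> /(_ (enum {ffun 'I_n -> bool})) [F HF]; exists F => x; apply: HF; by rewrite mem_enum. }
  elim=> [|t ts [F HF]]; first by exists nil.
  destruct (classic (finite_set (fun c => tau U c = t))) as [[s Hs]|Hn].
  - exists (s ++ F) => x; rewrite seq.in_cons => /orP [/eqP E|Hx] Hfin; apply in_or_app.
    + left; apply Hs; exact E.
    + right; exact: HF.
  - exists F => x; rewrite seq.in_cons => /orP [/eqP E|Hx] Hfin; last exact: HF.
    exfalso; apply Hn; rewrite -E; exact Hfin.
Qed.

Fixpoint allk T (F : list T) (k : nat) : list (list T) :=
  match k with 0 => nil :: nil | S k' => flat_map (fun a => List.map (cons a) (allk F k')) F end.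

Lemma allk_in T (F : list T) l : (forall a, In a l -> In a F) -> In l (allk F (size l)).
Proof.
  elim: l => [|a l IH] H /=; first by left.
  apply in_flat_map; exists a; split; first by apply H; left.
  apply in_map; apply IH => b Hb; apply H; by right.
Qed.

Lemma In_smap A B (f : A -> B) s b : In b (seq.map f s) -> exists a, b = f a.
Proof. elim: s => [|a s IH] //= [<-|H]; [by exists a|exact: IH]. Qed.

Lemma fin_tuples T k (F : list T) (d : T) : exists s : list ('I_k -> T),
  forall x : 'I_k -> T, (forall i, In (x i) F) -> In x s.
Proof.
  exists (List.map (fun l (i : 'I_k) => seq.nth d l i) (allk F k)).
  intros x Hx. apply in_map_iff. exists (seq.map x (enum 'I_k)). split.
  - apply functional_extensionality => i.
    rewrite (nth_map i) ?size_enum_ord // nth_ord_enum //.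
  - have E : size (seq.map x (enum 'I_k)) = k by rewrite size_map size_enum_ord.
    rewrite -[X in allk F X]E.
    apply allk_in => a Ha; have [i ->] := In_smap Ha; apply Hx.
Qed.

Lemma inhab T : infinite_type T -> exists d : T, True.
Proof. move=> Hinf; apply NNPP => H; apply Hinf; exists nil => x; apply H; exists x; done. Qed.

Lemma dir1 T k (Y : tuple_set T k) : mutually_algebraic Y -> monadically_definable Y ->
  infinite_type T -> finite_set (fun y => Y y /\ ~ diagonal y).
Proof.
  move=> [m Hm] [n [U [phi [p Hdef]]]] Hinf.
  have [d _] := inhab Hinf.
  set P := List.map p (vars phi).
  have [F HF] := finite_cells U.
  have key : forall y j i, Y y -> y i <> y j ->
     In (y j) P \/ finite_set (fun c => tau U c = tau U (y j)).
  { move=> y j i Yy Hij. apply NNPP => Hc. apply not_or_and in Hc as [HnP Hninf].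
    have [s [_ Hs]] := Hm (y i).
    apply Hninf. exists (List.map (fun f => f j) s ++ P ++ y i :: nil) => c Hc.
    destruct (classic (In c P)) as [HcP|HcP].
    { apply in_or_app; right; apply in_or_app; left; exact HcP. }
    destruct (classic (c = y i)) as [Ec|Ec].
    { apply in_or_app; right; apply in_or_app; right; left; auto. }
    apply in_or_app; left.
    set sw := swap (y j) c.
    have Hyy : Y (fun l => sw (y l)).
    { apply Hdef. apply Hdef in Yy.
      have i1 : forall x, sw (sw x) = x by move=> x; apply swap_invol.
      have i2 : forall j' x, U j' (sw x) <-> U j' x.
      { apply swap_U => j'; apply tau_U; by rewrite Hc. }
      move: Yy; apply (@sat_inv T n U sw sw i1 i1 i2 phi (tuple_env y p)).
      move=> v Hv; rewrite /tuple_env; case: insub => [o|]; first done.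
        have HpP : In (p v) P by apply in_map.
        rewrite /sw swap_other // => E; [apply HnP|apply HcP]; rewrite -E //. }
    have : In (fun l => sw (y l)) s.
    { apply Hs; split; first exact Hyy. exists i. rewrite /sw swap_other //. by auto. }
    move=> Hin; apply in_map_iff; exists (fun l => sw (y l)); split; last exact Hin.
    rewrite /sw; apply swap_a. }
  have [s Hs] := fin_tuples k (P ++ F) d.
  exists s => y [Yy Hnd]; apply Hs => j.
  have [i Hij] : exists i, y i <> y j.
  { apply NNPP => H; apply Hnd; exists (y j) => i; apply NNPP => H'; apply H; exists i; exact H'. }
  case: (key y j i Yy Hij) => H; apply in_or_app; [left|right; apply HF]; exact H.
Qed.

Lemma exact_list A (S : A -> Prop) : finite_set S -> exists s, forall y, S y <-> In y s.
Proof.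
  move=> [s Hs].
  suff: exists s', forall y, (S y /\ In y s) <-> In y s'.
  { move=> [s' H]; exists s' => y; rewrite -H; split; [move=> Sy; split=>//; exact: Hs|by case]. }
  clear Hs; elim: s => [|a s [s' H]]; first by exists nil => y; split; [case|].
  destruct (classic (S a)) as [Sa|Sa].
  - exists (a :: s') => y /=; rewrite -H; split.
    + move=> [Sy [->|Hy]]; [by left|by right].
    + move=> [<-|[Sy Hy]]; split; auto.
  - exists s' => y /=; rewrite -H; split.
    + move=> [Sy [E|Hy]]; [by subst|by split].
    + move=> [Sy Hy]; auto.
Qed.

Definition FTrue n : formula n := @FEq n 0 0.
Definition FOr n (a b : formula n) := FNot (FAnd (FNot a) (FNot b)).
Definition bigAnd n (l : list (formula n)) := fold_right (@FAnd n) (FTrue n) l.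
Definition bigOr n (l : list (formula n)) := fold_right (@FOr n) (FNot (FTrue n)) l.

Lemma sat_FOr T n (U : 'I_n -> T -> Prop) e a b : sat U e (FOr a b) <-> sat U e a \/ sat U e b.
Proof. simpl; split; [move=> H; apply NNPP => H'; apply H; tauto | tauto]. Qed.

Lemma sat_bigAnd T n (U : 'I_n -> T -> Prop) e l :
  sat U e (bigAnd l) <-> forall f, In f l -> sat U e f.
Proof.
  elim: l => [|a l IH] /=; first by split=> // _ f [].
  rewrite IH; split; [move=> [Ha Hl] f [<-|Hf]; auto | move=> H; split; auto].
Qed.

Lemma sat_bigOr T n (U : 'I_n -> T -> Prop) e l :
  sat U e (bigOr l) <-> exists f, In f l /\ sat U e f.
Proof.
  elim: l => [|a l IH].
  - simpl; split; [move=> H; exfalso; apply H; done | by move=> [f [[] _]]].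
  - change (sat U e (FOr a (bigOr l)) <-> exists f, In f (a :: l) /\ sat U e f).
    rewrite sat_FOr IH; split.
    + move=> [H|[f [Hf H]]]; [exists a; split=>//; by left | exists f; split=>//; by right].
    + move=> [f [[<-|Hf] H]]; [left|right; exists f]; auto.
Qed.

Lemma tuple_env_var T k (x : 'I_k -> T) p (i : 'I_k) : tuple_env x p i = x i.
Proof.
  rewrite /tuple_env; case: insubP => [o _ E|H]; first by congr x; apply val_inj.
  by rewrite ltn_ord in H.
Qed.

Lemma tuple_env_ge T k (x : 'I_k -> T) p v : k <= v -> tuple_env x p v = p v.
Proof.
  move=> Hv; rewrite /tuple_env; case: insubP => [o Ho _|//]. by move: Ho; rewrite ltnNge Hv.
Qed.

Definition getc T k (d : T) (c : 'I_k -> T) (i : nat) : T :=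
  match @insub nat (fun i => i < k) 'I_k i with Some o => c o | None => d end.

Lemma getc_ord T k d (c : 'I_k -> T) (i : 'I_k) : getc d c i = c i.
Proof.
  rewrite /getc; case: insubP => [o _ E|H]; first by congr c; apply val_inj.
  by rewrite ltn_ord in H.
Qed.

Lemma dir2 T k (Y : tuple_set T k) : infinite_type T -> 2 <= k ->
  finite_set (fun y => Y y /\ ~ diagonal y) -> monadically_definable Y.
Proof.
  move=> Hinf Hk Hfin. have [s Hs] := exact_list Hfin.
  have [d _] := inhab Hinf.
  have k0 : 0 < k by lia.
  pose i0 := Ordinal k0.
  pose dflt := fun _ : 'I_k => d.
  pose p := fun v => getc d (List.nth ((v - k) %/ k) s dflt) ((v - k) %% k).
  have Hp : forall (x : 'I_k -> T) (j : nat) (i : 'I_k), tuple_env x p (k + (j * k + i)) = List.nth j s dflt i.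
  { move=> x j i. rewrite tuple_env_ge ?leq_addr //.
    rewrite /p addKn divnMDl // divn_small // modnMDl modn_small // addn0 getc_ord //. }
  pose eqT := fun j => bigAnd (List.map (fun i => @FEq 1 i (k + (j * k + i))) (List.seq 0 k)).
  have HeqT : forall (x : 'I_k -> T) (j : nat), sat (fun _ a => Y (fun _ => a)) (tuple_env x p) (eqT j) <->
                          forall i : 'I_k, x i = List.nth j s dflt i.
  { move=> x j; rewrite sat_bigAnd; split.
    - move=> H i; have := H (@FEq 1 i (k + (j * k + i))).
      rewrite /= tuple_env_var Hp; apply; apply in_map_iff; exists (nat_of_ord i); split=>//.
      apply in_seq; have := ltn_ord i; lia.
    - move=> H f /in_map_iff [i' [<- Hi]]; apply in_seq in Hi.
      have Hi' : i' < k by lia.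
      rewrite /= -[i']/(nat_of_ord (Ordinal Hi')) tuple_env_var Hp; apply H. }
  pose diagF := FAnd (bigAnd (List.map (fun i => @FEq 1 i 0) (List.seq 0 k))) (FPred ord0 0).
  have Hdiag : forall x : 'I_k -> T, sat (fun _ a => Y (fun _ => a)) (tuple_env x p) diagF <->
                          (forall i, x i = x i0) /\ Y (fun _ => x i0).
  { move=> x; have e0 : tuple_env x p 0 = x i0 := tuple_env_var x p i0.
    rewrite /diagF /= sat_bigAnd e0; split.
    - move=> [H HY]; split=>// i; have := H (@FEq 1 i 0).
      rewrite /= e0 !tuple_env_var; apply; apply in_map_iff; exists (nat_of_ord i); split=>//.
      apply in_seq; have := ltn_ord i; lia.
    - move=> [H HY]; split=>// f /in_map_iff [i' [<- Hi]]; apply in_seq in Hi.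
      have Hi' : i' < k by lia.
      rewrite /= e0 -[i']/(nat_of_ord (Ordinal Hi')) !tuple_env_var; apply H. }
  exists 1, (fun _ a => Y (fun _ => a)), (FOr diagF (bigOr (List.map eqT (List.seq 0 (length s))))), p.
  move=> x; rewrite sat_FOr Hdiag sat_bigOr; split.
  - move=> Yx; destruct (classic (diagonal x)) as [[a Ha]|Hnd].
    + left; split; first by move=> i; rewrite !Ha.
      have -> : (fun _ : 'I_k => x i0) = x by apply functional_extensionality => i; rewrite !Ha.
      done.
    + right; have /(In_nth _ _ dflt) [j [Hj Ej]] : In x s by apply Hs.
      exists (eqT j); split; first by apply in_map_iff; exists j; split=>//; apply in_seq; lia.
      apply HeqT => i; by rewrite Ej.
  - move=> [[H HY]|[f [/in_map_iff [j [<- Hj]] Hf]]].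
    + have -> : x = (fun _ : 'I_k => x i0) by apply functional_extensionality => i; rewrite H.
      done.
    + apply in_seq in Hj; have {}Hf := proj1 (HeqT x j) Hf.
      have -> : x = List.nth j s dflt by apply functional_extensionality.
      apply Hs; apply nth_In; lia.
Qed.

Theorem lemma4p3 (T : Type) (k : nat) (Y : tuple_set T k) :
  infinite_type T -> 2 <= k -> mutually_algebraic Y ->
  (monadically_definable Y <->
   finite_set (fun y : 'I_k -> T => Y y /\ ~ diagonal y)).
Proof.
  move=> Hinf Hk Hma; split.
  - move=> Hmd; exact: dir1.
  - exact: dir2.
Qed.
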